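(* Fix $n\in\mathbb{N}$. If $0<U\le \frac{T}{\ln^2T}$ and $T$ is sufficiently large, then $$0<\varphi_1^k(T+U)-\varphi_1^k(T)<\frac{2k+1}{2n+1}\,\frac{T}{\ln T}\le\frac{T}{\ln T},\qquad k=1,\dots,n.$$
   Context: A Jacob's ladder is a function $\varphi_1(t)=\frac12\varphi(t)$, where $y=\varphi(T)$ is an arbitrary solution of the nonlinear integral equation $\int_0^{\mu[x(T)]}Z^2(t)e^{-\frac{2}{x(T)}t}\,{\rm d}t=\int_0^T Z^2(t)\,{\rm d}t$, with $Z(t)=e^{i\vartheta(t)}\zeta(\frac12+it)$, $\vartheta(t)=-\frac t2\ln\pi+\operatorname{Im}\ln\Gamma(\frac14+i\frac t2)$, $\mu(y)\ge 7y\ln y$. It is known that $\varphi_1$ is increasing for $t\ge T_0[\varphi_1]$ and satisfies $t-\varphi_1(t)\sim(1-c)\frac{t}{\ln t}$ as $t\to\infty$, where $c$ is Euler's constant. Iterates: $\varphi_1^0(t)=t$, $\varphi_1^{k+1}(t)=\varphi_1(\varphi_1^k(t))$. *)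

(* Defs.v *)
From Stdlib Require Import Reals Lra Lia.
Open Scope R_scope.

Fixpoint iterf (k : nat) (f : R -> R) (t : R) : R :=
  match k with
  | O => t
  | S k' => f (iterf k' f t)
  end.

Fixpoint harmonic (n : nat) : R :=
  match n with
  | O => 0
  | S m => harmonic m + / INR (S m)
  end.

Definition is_euler_constant (c : R) : Prop :=
  Un_cv (fun n => harmonic n - ln (INR n)) c.

Definition lim_at_infty (f : R -> R) (l : R) : Prop :=
  forall eps : R, eps > 0 ->
    exists M : R, forall t : R, t >= M -> Rabs (f t - l) < eps.

(* The known properties of a Jacob's ladder phi1 used as hypotheses:
   phi1 is (strictly) increasing for t >= T0, and
   t - phi1 t ~ (1 - c) t / ln t as t -> infinity. *)
Definition jacob_ladder_props (c : R) (phi1 : R -> R) : Prop :=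
  (exists T0 : R, forall s t : R, T0 <= s -> s < t -> phi1 s < phi1 t) /\
  lim_at_infty (fun t => (t - phi1 t) / ((1 - c) * t / ln t)) 1.

(* Main.v *)
Require Import Defs.
From Stdlib Require Import Reals Lra Lia.
Open Scope R_scope.
Lemma ln_bound z : 0 < z -> ln z <= z - 1.
Proof. intro Hz. pose proof (exp_ineq1_le (ln z)). rewrite exp_ln in H by lra. lra. Qed.

Lemma ln_le' x y : 0 < x -> x <= y -> ln x <= ln y.
Proof. intros Hx Hxy. destruct (Rle_lt_or_eq_dec _ _ Hxy) as [H|H].
 left; apply ln_increasing; lra. subst; lra. Qed.

Lemma xlnx_mono x y : 0 < x -> 1 <= ln x -> x <= y -> x / ln x <= y / ln y.
Proof.
  intros Hx Hl Hxy.
  assert (Hly : ln x <= ln y) by (apply ln_le'; lra).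
  assert (Hyx : ln y = ln x + ln (y / x)).
  { rewrite <- ln_mult by (try apply Rdiv_lt_0_compat; lra). f_equal. field. lra. }
  assert (Hb : ln (y/x) <= y/x - 1) by (apply ln_bound; apply Rdiv_lt_0_compat; lra).
  assert (Hk : x * ln y <= y * ln x).
  { rewrite Hyx. assert (x * ln (y/x) <= y - x).
    { replace (y - x) with (x * (y/x - 1)) by (field; lra). apply Rmult_le_compat_l; lra. }
    nra. }
  apply (Rmult_le_reg_r (ln x * ln y)). nra.
  replace (x / ln x * (ln x * ln y)) with (x * ln y) by (field; lra).
  replace (y / ln y * (ln x * ln y)) with (y * ln x) by (field; lra). lra.
Qed.

Lemma u_step n : (1 <= n)%nat ->
  harmonic (S n) - ln (INR (S n)) <= harmonic n - ln (INR n).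
Proof.
  intros Hn. change (harmonic (S n)) with (harmonic n + / INR (S n)).
  assert (H1 : 1 <= INR n) by (apply (le_INR 1); lia).
  assert (H2 : INR (S n) = INR n + 1) by (rewrite S_INR; auto).
  rewrite H2.
  assert (Hr : ln (INR n) = ln (INR n + 1) + ln (INR n / (INR n + 1))).
  { rewrite <- ln_mult by (try apply Rdiv_lt_0_compat; lra). f_equal. field. lra. }
  assert (Hb : ln (INR n / (INR n + 1)) <= INR n / (INR n + 1) - 1)
    by (apply ln_bound; apply Rdiv_lt_0_compat; lra).
  replace (INR n / (INR n + 1) - 1) with (- / (INR n + 1)) in Hb by (field; lra).
  lra.
Qed.

Lemma u_le2 m : harmonic (m + 2) - ln (INR (m + 2)) <= harmonic 2 - ln (INR 2).
Proof.
  induction m. simpl; lra.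
  replace (S m + 2)%nat with (S (m + 2)) by lia.
  eapply Rle_trans. apply u_step. lia. exact IHm.
Qed.

Lemma euler_lt1 c : is_euler_constant c -> c < 1.
Proof.
  intros Hc.
  assert (Hu2 : harmonic 2 - ln (INR 2) < 1).
  { pose proof ln_lt_2. simpl. replace (1+1) with 2 by lra. lra. }
  destruct (Rlt_or_le c 1) as [h|h]; [exact h|exfalso].
  destruct (Hc (c - (harmonic 2 - ln (INR 2)))) as [N HN]. lra.
  specialize (HN (N + 2)%nat ltac:(lia)). unfold R_dist in HN.
  pose proof (u_le2 N). apply Rabs_def2 in HN. lra.
Qed.
Theorem mainTheorem4 :
  forall (c : R) (phi1 : R -> R),
    is_euler_constant c ->
    jacob_ladder_props c phi1 ->
    forall n : nat,
      exists T1 : R,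
        forall T U : R,
          T >= T1 ->
          0 < U -> U <= T / (ln T) ^ 2 ->
          forall k : nat, (1 <= k <= n)%nat ->
            0 < iterf k phi1 (T + U) - iterf k phi1 T /\
            iterf k phi1 (T + U) - iterf k phi1 T
              < (2 * INR k + 1) / (2 * INR n + 1) * (T / ln T) /\
            (2 * INR k + 1) / (2 * INR n + 1) * (T / ln T) <= T / ln T.
Proof.
  intros c phi1 Hc [[T0 Hmono] Hlim] n.
  pose proof (euler_lt1 c Hc) as Hc1.
  set (a := 1 - c).
  assert (Ha : 0 < a) by (unfold a; lra).
  set (N := 2 * INR n + 1).
  assert (HN : 1 <= N) by (unfold N; pose proof (pos_INR n); lra).
  set (d := / (2 * (a + 1) * N)).
  assert (Hd : 0 < d) by (unfold d; apply Rinv_0_lt_compat; nra).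
  assert (Hd2 : d <= / 2).
  { unfold d. apply Rinv_le_contravar. lra. nra. }
  set (eta := 2 * a * d).
  assert (Heta : 0 < eta) by (unfold eta; nra).
  assert (HetaN : eta * N <= 1).
  { unfold eta, d. replace (2 * a * / (2 * (a + 1) * N) * N) with (a / (a + 1)) by (field; lra).
    apply (Rmult_le_reg_r (a+1)). lra. unfold Rdiv. rewrite Rmult_assoc, Rinv_l by lra. lra. }
  destruct (Hlim d Hd) as [M1 HM1].
  set (M := Rmax M1 (Rmax T0 (exp (3 * a + 1)))).
  assert (HMe : exp (3 * a + 1) <= M) by (unfold M; eapply Rle_trans; [apply Rmax_r|apply Rmax_r]).
  assert (HMT0 : T0 <= M) by (unfold M; eapply Rle_trans; [apply Rmax_l|apply Rmax_r]).
  assert (HMM1 : M1 <= M) by (unfold M; apply Rmax_l).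
  assert (Hexp1 : 1 < exp (3 * a + 1)) by (pose proof (exp_ineq1_le (3*a+1)); lra).
  assert (Hpos : forall t, M <= t -> 1 < t) by (intros; lra).
  assert (Hln : forall t, M <= t -> 3 * a + 1 <= ln t).
  { intros t Ht. rewrite <- (ln_exp (3*a+1)). apply ln_le'. apply exp_pos. lra. }
  assert (Hdec : forall t, M <= t ->
     exists h, 1 - d < h < 1 + d /\ phi1 t = t - a * (t / ln t) * h).
  { intros t Ht. pose proof (Hln t Ht). pose proof (Hpos t Ht).
    exists ((t - phi1 t) / ((1 - c) * t / ln t)).
    specialize (HM1 t ltac:(lra)). apply Rabs_def2 in HM1. split. lra.
    fold a. field. split; lra. }
  assert (F1 : forall t, M <= t -> t / 2 <= phi1 t <= t).
  { intros t Ht. destruct (Hdec t Ht) as [h [Hh ->]].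
    pose proof (Hln t Ht). pose proof (Hpos t Ht).
    assert (HA : 0 < t / ln t) by (apply Rdiv_lt_0_compat; lra).
    assert (HAl : t / ln t * ln t = t) by (field; lra).
    assert (a * (t / ln t) * h <= t / 2).
    { assert (a * (t / ln t) * h <= a * (t / ln t) * (3/2)).
      { apply Rmult_le_compat_l. nra. lra. }
      assert (a * (t / ln t) * 3 <= t / ln t * ln t) by nra. lra. }
    assert (0 < a * (t / ln t) * h) by (apply Rmult_lt_0_compat; nra).
    lra. }
  assert (F2 : forall t u, M <= t -> 0 <= u ->
     phi1 (t + u) - phi1 t <= u + eta * (t / ln t)).
  { intros t u Ht Hu. destruct (Hdec t Ht) as [h [Hh ->]].
    destruct (Hdec (t+u) ltac:(lra)) as [h2 [Hh2 ->]].
    pose proof (Hln t Ht). pose proof (Hpos t Ht).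
    assert (HA : 0 < t / ln t) by (apply Rdiv_lt_0_compat; lra).
    assert (HB : t / ln t <= (t + u) / ln (t + u)) by (apply xlnx_mono; lra).
    assert (a * (t / ln t) * (1 - d) <= a * ((t + u) / ln (t + u)) * h2).
    { apply Rmult_le_compat. nra. lra. apply Rmult_le_compat_l; lra. lra. }
    assert (a * (t / ln t) * h <= a * (t / ln t) * (1 + d)).
    { apply Rmult_le_compat_l. nra. lra. }
    unfold eta. nra. }
  exists (Rmax (2 ^ n * M) (exp (2 * INR n + 2))).
  intros T U HT HU HUb k Hk.
  assert (HT1 : 2 ^ n * M <= T) by (pose proof (Rmax_l (2 ^ n * M) (exp (2 * INR n + 2))); lra).
  assert (HT2 : exp (2 * INR n + 2) <= T) by (pose proof (Rmax_r (2 ^ n * M) (exp (2 * INR n + 2))); lra).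
  assert (H2n : 1 <= 2 ^ n) by (apply pow_R1_Rle; lra).
  assert (HTpos : 0 < T) by nra.
  assert (HlnT : 2 * INR n + 2 <= ln T).
  { rewrite <- (ln_exp (2 * INR n + 2)). apply ln_le'. apply exp_pos. lra. }
  assert (HlnTp : 0 < ln T) by (pose proof (pos_INR n); lra).
  set (L := T / ln T).
  assert (HL : 0 < L) by (unfold L; apply Rdiv_lt_0_compat; pose proof (pos_INR n); lra).
  assert (Claim : forall j, (j <= n)%nat ->
     T / 2 ^ j <= iterf j phi1 T <= T /\
     0 < iterf j phi1 (T + U) - iterf j phi1 T /\
     iterf j phi1 (T + U) - iterf j phi1 T <= U + INR j * eta * L).
  { induction j as [|j IH]; intros Hj.
    - simpl. split. lra. split; lra.
    - destruct (IH ltac:(lia)) as [[Ht1 Ht2] [Hd1 Hd3]].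
      set (t := iterf j phi1 T) in *.
      set (s := iterf j phi1 (T + U)) in *.
      change (iterf (S j) phi1 T) with (phi1 t).
      change (iterf (S j) phi1 (T + U)) with (phi1 s).
      assert (Hpj : 2 ^ j <= 2 ^ n) by (apply Rle_pow; [lra|lia]).
      assert (Hpj0 : 0 < 2 ^ j) by (apply pow_lt; lra).
      assert (HtM : M <= t).
      { assert (T / 2 ^ n <= T / 2 ^ j).
        { apply Rmult_le_compat_l. lra. apply Rinv_le_contravar; lra. }
        assert (M <= T / 2 ^ n).
        { apply (Rmult_le_reg_r (2 ^ n)). lra. unfold Rdiv. rewrite Rmult_assoc, Rinv_l by lra. lra. }
        lra. }
      pose proof (F1 t HtM) as [F1a F1b].
      pose proof (Hln t HtM). pose proof (Hpos t HtM).
      split; [split|split].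
      + simpl pow. replace (T / (2 * 2 ^ j)) with (T / 2 ^ j / 2) by (field; lra). lra.
      + lra.
      + assert (phi1 t < phi1 s) by (apply Hmono; lra). lra.
      + pose proof (F2 t (s - t) HtM ltac:(lra)) as F.
        replace (t + (s - t)) with s in F by ring.
        assert (t / ln t <= L) by (unfold L; apply xlnx_mono; lra).
        rewrite S_INR. nra. }
  destruct (Claim k ltac:(lia)) as [_ [Hp Hb]].
  assert (HINk : INR k <= INR n) by (apply le_INR; lia).
  assert (HUL : U * N < L).
  { assert (HUL' : U * ln T <= L).
    { unfold L. apply (Rmult_le_reg_r (ln T)). lra.
      replace (T / ln T * ln T) with T by (field; lra).
      apply (Rmult_le_compat_r (ln T)) in HUb; [|lra].
      replace (T / ln T ^ 2 * ln T) with (T / ln T) in HUb by (field; lra).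
      apply (Rmult_le_compat_r (ln T)) in HUb; [|lra].
      replace (T / ln T * ln T) with T in HUb by (field; lra). nra. }
    unfold N. nra. }
  assert (Hk0 : 0 <= INR k) by apply pos_INR.
  split; [exact Hp|split].
  - apply (Rle_lt_trans _ (U + INR k * eta * L)); [exact Hb|].
    fold L. fold N.
    apply (Rmult_lt_reg_r N). lra.
    replace ((2 * INR k + 1) / N * L * N) with ((2 * INR k + 1) * L) by (field; lra).
    assert (INR k * eta * L * N <= INR k * L).
    { replace (INR k * eta * L * N) with (INR k * L * (eta * N)) by ring.
      assert (0 <= INR k * L) by nra. nra. }
    nra.
  - fold L. fold N.
    replace ((2 * INR k + 1) / N * L) with ((2 * INR k + 1) * L / N) by (field; lra).
    apply (Rmult_le_reg_r N). lra.
    replace ((2 * INR k + 1) * L / N * N) with ((2 * INR k + 1) * L) by (field; lra).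
    unfold N. nra.
Qed.
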